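(* Let $U\subseteq\mathbb{R}^4$ be open with coordinates $(x^1,x^2,x^3,x^4)$ and let $a,b,p,q,s$ be real constants with $a^2+b^2\neq0$. Consider the Lorentzian metric $$g=2\,dx^1dx^4+(dx^2)^2+(dx^3)^2+\Big(x^4\big(a(x^2)^2+b(x^3)^2\big)+p(x^2)^2+2qx^2x^3+s(x^3)^2\Big)(dx^4)^2$$ on $U$. Then $(U,g)$ belongs to class $\mathcal{B}$, i.e. its Ricci tensor is a Codazzi tensor.
   Context: A pseudo-Riemannian manifold belongs to Gray's class $\mathcal{B}$ if its Ricci tensor $\varrho$ satisfies $(\nabla_X\varrho)(Y,Z)=(\nabla_Y\varrho)(X,Z)$ for all vector fields $X,Y,Z$, where $\nabla$ is the Levi-Civita connection. *)

(* Defs.v *)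
From Stdlib Require Import Reals Lra.
From Coquelicot Require Import Coquelicot.
Open Scope R_scope.

(* Points of R^4 are functions nat -> R; only the coordinates 0,1,2,3 are used.
   Paper coordinate x^(i+1) corresponds to index i. *)
Definition pt := nat -> R.

Definition upd (x : pt) (i : nat) (t : R) : pt :=
  fun j => if Nat.eqb j i then t else x j.

Definition pd (f : pt -> R) (i : nat) (x : pt) : R :=
  Derive (fun t => f (upd x i t)) (x i).

Definition sum4 (F : nat -> R) : R := F 0%nat + F 1%nat + F 2%nat + F 3%nat.

Definition kron (i j : nat) : R := if Nat.eqb i j then 1 else 0.

Definition is_open4 (U : pt -> Prop) : Prop :=
  forall x, U x -> exists eps, 0 < eps /\
    forall y, (forall i, (i < 4)%nat -> Rabs (y i - x i) < eps) -> U y.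

Definition Fcoef (a b p q s : R) (x : pt) : R :=
  x 3%nat * (a * (x 1%nat)^2 + b * (x 2%nat)^2)
  + p * (x 1%nat)^2 + 2 * q * x 1%nat * x 2%nat + s * (x 2%nat)^2.

Definition metric (a b p q s : R) (x : pt) (i j : nat) : R :=
  match i, j with
  | O, S (S (S O)) => 1 | S (S (S O)), O => 1
  | S O, S O => 1 | S (S O), S (S O) => 1
  | S (S (S O)), S (S (S O)) => Fcoef a b p q s x
  | _, _ => 0
  end.

Section Geo.
Variables (g ginv : pt -> nat -> nat -> R).

Definition christ (k i j : nat) (x : pt) : R :=
  / 2 * sum4 (fun l => ginv x k l *
     (pd (fun y => g y j l) i x + pd (fun y => g y i l) j x
      - pd (fun y => g y i j) l x)).

Definition ricci (i j : nat) (x : pt) : R :=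
  sum4 (fun k => pd (christ k i j) k x - pd (christ k k i) j x
     + sum4 (fun l => christ k k l x * christ l i j x
                      - christ k j l x * christ l k i x)).

Definition cov_ricci (k i j : nat) (x : pt) : R :=
  pd (ricci i j) k x
  - sum4 (fun l => christ l k i x * ricci l j x)
  - sum4 (fun l => christ l k j x * ricci i l x).
End Geo.

(* Main.v *)
Require Import Defs.
From Stdlib Require Import Reals Lra Lia.
From Coquelicot Require Import Coquelicot.
Open Scope R_scope.

Lemma pd_ext (f h : pt -> R) i x :
  (forall y, f y = h y) -> pd f i x = pd h i x.
Proof. intros H. unfold pd. apply Derive_ext. intros; apply H. Qed.

Lemma pd_scal (c : R) (f : pt -> R) i x :
  pd (fun y => c * f y) i x = c * pd f i x.
Proof. unfold pd. apply Derive_scal. Qed.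

Lemma pd_const (c : R) i x : pd (fun _ => c) i x = 0.
Proof. unfold pd. apply Derive_const. Qed.

Section S.
Variables a b p q s : R.

Definition dF (n : nat) (y : pt) : R :=
  match n with
  | 1%nat => 2 * a * y 3%nat * y 1%nat + 2 * p * y 1%nat + 2 * q * y 2%nat
  | 2%nat => 2 * b * y 3%nat * y 2%nat + 2 * q * y 1%nat + 2 * s * y 2%nat
  | 3%nat => a * (y 1%nat)^2 + b * (y 2%nat)^2
  | _ => 0
  end.

Definition ddF (n m : nat) (y : pt) : R :=
  match n, m with
  | 1%nat, 1%nat => 2 * a * y 3%nat + 2 * p
  | 1%nat, 2%nat => 2 * q
  | 1%nat, 3%nat => 2 * a * y 1%nat
  | 2%nat, 1%nat => 2 * q
  | 2%nat, 2%nat => 2 * b * y 3%nat + 2 * s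
  | 2%nat, 3%nat => 2 * b * y 2%nat
  | 3%nat, 1%nat => 2 * a * y 1%nat
  | 3%nat, 2%nat => 2 * b * y 2%nat
  | _, _ => 0
  end.

Ltac dcase n := destruct n as [|[|[|[|n]]]].

Lemma pd_F n y : pd (Fcoef a b p q s) n y = dF n y.
Proof.
  dcase n; unfold pd, upd, Fcoef; cbn [Nat.eqb]; apply is_derive_unique;
  auto_derive; auto; unfold dF; ring.
Qed.

Lemma pd_dF n m y : pd (dF n) m y = ddF n m y.
Proof.
  dcase n; dcase m; unfold pd, upd, dF; cbn [Nat.eqb]; apply is_derive_unique;
  auto_derive; auto; unfold ddF; ring.
Qed.

Definition mF (j l : nat) : R :=
  match j, l with 3%nat, 3%nat => 1 | _, _ => 0 end.

Lemma pd_metric j l i y :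
  pd (fun z => metric a b p q s z j l) i y = mF j l * dF i y.
Proof.
  dcase j; dcase l; cbn [metric mF];
  first [ rewrite pd_const; ring | rewrite pd_F; ring ].
Qed.

Definition Gi (y : pt) (k l : nat) : R :=
  match k, l with
  | 0%nat, 0%nat => - Fcoef a b p q s y
  | 0%nat, 3%nat => 1 | 3%nat, 0%nat => 1
  | 1%nat, 1%nat => 1 | 2%nat, 2%nat => 1
  | _, _ => 0 end.

Definition Gam (k i j : nat) : pt -> R :=
  match k, i, j with
  | 0%nat, 1%nat, 3%nat => fun y => / 2 * dF 1 y
  | 0%nat, 3%nat, 1%nat => fun y => / 2 * dF 1 y
  | 0%nat, 2%nat, 3%nat => fun y => / 2 * dF 2 y
  | 0%nat, 3%nat, 2%nat => fun y => / 2 * dF 2 y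
  | 0%nat, 3%nat, 3%nat => fun y => / 2 * dF 3 y
  | 1%nat, 3%nat, 3%nat => fun y => - / 2 * dF 1 y
  | 2%nat, 3%nat, 3%nat => fun y => - / 2 * dF 2 y
  | _, _, _ => fun _ => 0 end.

Lemma christ_eq k i j y :
  christ (metric a b p q s) Gi k i j y = Gam k i j y.
Proof.
  unfold christ, sum4. rewrite !pd_metric.
  dcase k; dcase i; dcase j; cbn [Gi mF Gam dF]; field.
Qed.

Lemma pd_christ k i j m y :
  pd (christ (metric a b p q s) Gi k i j) m y = pd (Gam k i j) m y.
Proof. apply pd_ext; intros; apply christ_eq. Qed.

Definition Ric (i j : nat) : pt -> R :=
  match i, j with 3%nat, 3%nat => fun y => -((a + b) * y 3%nat + p + s)
  | _, _ => fun _ => 0 end.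

Lemma ricci_eq i j y :
  ricci (metric a b p q s) Gi i j y = Ric i j y.
Proof.
  unfold ricci, sum4. rewrite !pd_christ, !christ_eq.
  dcase i; dcase j; cbn [Gam Ric]; rewrite ?pd_scal, ?pd_const, ?pd_dF;
  cbn [dF ddF]; field.
Qed.

Definition e3 (n : nat) : R := match n with 3%nat => 1 | _ => 0 end.

Lemma pd_Ric k y : pd (fun y => -((a + b) * y 3%nat + p + s)) k y = - (a + b) * e3 k.
Proof.
  dcase k; unfold pd, upd; cbn [Nat.eqb e3]; apply is_derive_unique;
  auto_derive; auto; ring.
Qed.

Lemma cov_eq k i j y :
  cov_ricci (metric a b p q s) Gi k i j y = - (a + b) * e3 k * e3 i * e3 j.
Proof.
  unfold cov_ricci, sum4.
  rewrite (pd_ext _ _ _ _ (ricci_eq i j)), !ricci_eq, !christ_eq.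
  dcase i; dcase j; cbn [Ric Gam]; rewrite ?pd_Ric, ?pd_const;
  dcase k; cbn [e3 Gam dF]; ring.
Qed.
End S.

Lemma ginv_eq (U : pt -> Prop) a b p q s ginv :
  (forall x, U x -> forall i j, (i < 4)%nat -> (j < 4)%nat ->
     sum4 (fun k => metric a b p q s x i k * ginv x k j) = kron i j) ->
  forall y, U y -> forall k l, (k < 4)%nat -> (l < 4)%nat ->
  ginv y k l = Gi a b p q s y k l.
Proof.
  intros H y Hy k l Hk Hl.
  pose proof (H y Hy 0%nat l ltac:(lia) Hl) as H0.
  pose proof (H y Hy 1%nat l ltac:(lia) Hl) as H1.
  pose proof (H y Hy 2%nat l ltac:(lia) Hl) as H2.
  pose proof (H y Hy 3%nat l ltac:(lia) Hl) as H3.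
  unfold sum4 in *; cbn [metric] in *.
  assert (E3 : ginv y 3%nat l = kron 0 l) by lra.
  rewrite E3 in H3.
  destruct k as [|[|[|[|k]]]]; try lia;
  destruct l as [|[|[|[|l]]]]; try lia; cbn [Gi kron Nat.eqb] in *; lra.
Qed.
Lemma pd_loc (U : pt -> Prop) (f h : pt -> R) i x :
  is_open4 U -> (forall y, U y -> f y = h y) -> U x -> pd f i x = pd h i x.
Proof.
  intros HO Hfh Hx. unfold pd. apply Derive_ext_loc.
  destruct (HO x Hx) as [eps [Heps Hy]].
  exists (mkposreal eps Heps). intros t Ht. apply Hfh, Hy.
  intros j _. unfold upd. destruct (Nat.eqb j i) eqn:E.
  - apply Nat.eqb_eq in E; subst j. exact Ht.
  - rewrite Rminus_diag, Rabs_R0. exact Heps.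
Qed.

Theorem mainTheorem4 (U : pt -> Prop) (a b p q s : R)
  (ginv : pt -> nat -> nat -> R) :
  is_open4 U ->
  a ^ 2 + b ^ 2 <> 0 ->
  (* ginv is the inverse matrix of the metric at every point of U *)
  (forall x, U x -> forall i j, (i < 4)%nat -> (j < 4)%nat ->
     sum4 (fun k => metric a b p q s x i k * ginv x k j) = kron i j) ->
  (* class B: the Ricci tensor is Codazzi, (nabla_k rho)_{ij} = (nabla_i rho)_{kj} *)
  forall x, U x -> forall i j k, (i < 4)%nat -> (j < 4)%nat -> (k < 4)%nat ->
    cov_ricci (metric a b p q s) ginv k i j x
    = cov_ricci (metric a b p q s) ginv i k j x.
Proof.
  intros HO _ Hinv.
  pose proof (ginv_eq U a b p q s ginv Hinv) as HG.
  assert (HC : forall y, U y -> forall k i j, (k < 4)%nat ->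
    christ (metric a b p q s) ginv k i j y = christ (metric a b p q s) (Gi a b p q s) k i j y).
  { intros y Hy k i j Hk. unfold christ, sum4.
    rewrite !(HG y Hy k) by lia. reflexivity. }
  assert (HR : forall y, U y -> forall i j,
    ricci (metric a b p q s) ginv i j y = ricci (metric a b p q s) (Gi a b p q s) i j y).
  { intros y Hy i j. unfold ricci, sum4.
    rewrite !(pd_loc U (christ _ ginv _ _ _) (christ _ (Gi a b p q s) _ _ _) _ _ HO)
      by (try exact Hy; intros; apply HC; auto; lia).
    rewrite !(HC y Hy) by lia. reflexivity. }
  assert (HV : forall y, U y -> forall k i j,
    cov_ricci (metric a b p q s) ginv k i j y = cov_ricci (metric a b p q s) (Gi a b p q s) k i j y).
  { intros y Hy k i j. unfold cov_ricci, sum4.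
    rewrite (pd_loc U (ricci _ ginv i j) (ricci _ (Gi a b p q s) i j) _ _ HO)
      by (try exact Hy; intros; apply HR; auto).
    rewrite !(HR y Hy), !(HC y Hy) by lia. reflexivity. }
  intros x Hx i j k _ _ _.
  rewrite !(HV x Hx), !cov_eq. ring.
Qed.
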